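(* Let $p\geq2$, $n_1,\dots,n_l\geq1$ be integers with $\sum_j p^{-n_j}=1$ and let $T_p$ be the map satisfying Condition 1 with slopes $\Lambda_j=p^{n_j}$. Let $U$ be a quantization of $T_p$ acting on $\mathcal H_\Bbbk\cong\mathbb C^{N_\Bbbk}$ with $N_\Bbbk=p^\Bbbk$ (with respect to the partition of $[0,1]$ into $p^\Bbbk$ equal intervals), and set $n_{\mathrm E}=\lfloor\log N_\Bbbk/\log\Lambda_{\max}\rfloor$, $\Lambda_{\max}=\max_j\Lambda_j$. Then for every base-$p$ cylinder $[\![\mathrm x]\!]$ of length $|\mathrm x|=m$, $$U^{-n}P_{[\![\mathrm x]\!]}U^n=P_{T_p^{-n}[\![\mathrm x]\!]}\qquad\text{for all } n \text{ with } n+m\leq n_{\mathrm E}.$$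
   Context: Condition 1: $[0,1]$ is divided into consecutive intervals $I_1,\dots,I_l$ with $|I_j|=\Lambda_j^{-1}$, and $T_p$ is affine with slope $\Lambda_j$ on $I_j$ mapping $I_j$ onto $[0,1]$ (so $T_p(x)=p^{n_j}x\bmod 1$ on $I_j$). For a word $\mathrm x=\mathrm x_1\dots\mathrm x_m$ over $\{0,\dots,p-1\}$, $[\![\mathrm x]\!]$ is the interval of points whose first $m$ base-$p$ digits are $\mathrm x_1,\dots,\mathrm x_m$. Let $E_i=[(i-1)p^{-\Bbbk},ip^{-\Bbbk}]$; with $B(i,j)=|E_i\cap T_p^{-1}E_j|/|E_i|$, a quantization is a unitary matrix $U$ with $B(j,i)=|U(i,j)|^2$ for all $i,j$. For a finite union $Y$ of intervals $E_i$, $P_Y$ is the diagonal matrix with entry $1$ at $i$ if $E_i\subseteq Y$ and $0$ otherwise (i.e. $P_Y=\mathrm{Op}(\chi_Y)$, the diagonal matrix of averages of $\chi_Y$ over the $E_i$). *)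

(* Defs.v *)
From HB Require Import structures.
From mathcomp Require Import all_boot all_order all_algebra.
From mathcomp Require Import all_classical all_reals all_analysis.
From mathcomp Require Import complex.
Set Implicit Arguments. Unset Strict Implicit. Unset Printing Implicit Defensive.
Import Order.TTheory GRing.Theory Num.Theory.
Local Open Scope classical_set_scope.
Local Open Scope ring_scope.
Local Open Scope complex_scope.

Section Defs.
Variable R : realType.

Definition lenR (A : set R) : R := fine (lebesgue_measure A).

(* left endpoint a_j of the j-th interval I_j = [a_j, a_j + p^{-n_j}] *)
Definition branch_start (p l : nat) (ns : 'I_l -> nat) (j : 'I_l) : R :=
  \sum_(i < l | (i < j)%N) (p%:R ^- ns i).

(* Condition 1: T is affine with slope p^{n_j} mapping I_j onto [0,1]
   (prescribed on the interior of each I_j; endpoints form a null set) *)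
Definition condition1 (p l : nat) (ns : 'I_l -> nat) (T : R -> R) : Prop :=
  forall (j : 'I_l) (x : R),
    branch_start p ns j < x < branch_start p ns j + p%:R ^- ns j ->
    T x = p%:R ^+ ns j * (x - branch_start p ns j).

(* E_i, 0-indexed: E_i = [i p^{-k}, (i+1) p^{-k}] for i < p^k *)
Definition Ecell (p k : nat) (i : 'I_(p ^ k)) : set R :=
  `[ (i%:R / p%:R ^+ k), ((i.+1)%:R / p%:R ^+ k) ]%classic.

Definition Bmat (p k : nat) (T : R -> R) (i j : 'I_(p ^ k)) : R :=
  lenR (Ecell i `&` T @^-1` Ecell j) / lenR (Ecell i).

Definition unitary_mx (N : nat) (U : 'M[R[i]]_N) : Prop :=
  U *m (map_mx conjc U)^T = 1%:M.

Definition is_quantization (p k : nat) (T : R -> R) (U : 'M[R[i]]_(p ^ k)) : Prop :=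
  unitary_mx U /\
  forall i j : 'I_(p ^ k), (Bmat T j i)%:C = `|U i j| ^+ 2.

(* base-p cylinder [[x]]: points whose first m = size x base-p digits are x *)
Definition cylinder (p : nat) (x : seq 'I_p) : set R :=
  let c : R := \sum_(i < size x) (nth 0%N [seq val d | d <- x] i)%:R * p%:R ^- i.+1 in
  `[ c, (c + p%:R ^- size x) [%classic.

(* P_Y = Op(chi_Y): diagonal matrix of the averages of chi_Y over the E_i *)
Definition Pop (p k : nat) (Y : set R) : 'M[R[i]]_(p ^ k) :=
  diag_mx (\row_i ((lenR (Ecell i `&` Y) / lenR (Ecell i))%:C)).

Definition nE (p k l : nat) (ns : 'I_l -> nat) : int :=
  Num.floor (ln ((p ^ k)%:R : R) / ln ((\max_(j < l) p ^ ns j)%:R)).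

End Defs.

Arguments condition1 {R} p {l} ns T.
Arguments is_quantization {R} p k T U.
Arguments Pop {R} p k Y.
Arguments cylinder {R} p x.
Arguments nE R p k {l} ns.

(* Main.v *)
Set Warnings "-all".
Require Import Defs.
From HB Require Import structures.
From mathcomp Require Import all_boot all_order all_algebra.
From mathcomp Require Import all_classical all_reals all_analysis.
From mathcomp Require Import complex.
From mathcomp Require Import zify.
Import Order.TTheory GRing.Theory Num.Theory.
Local Open Scope classical_set_scope.
Local Open Scope ring_scope.

Section Meas.
Variable R : realType.

Lemma lm_le (A B : set R) : A `<=` B -> (lebesgue_measure A <= lebesgue_measure B)%E.
Proof. move=> AB. apply: le_outer_measure. exact AB. Qed.
Lemma lm_U2 (A B : set R) : (lebesgue_measure (A `|` B) <= lebesgue_measure A + lebesgue_measure B)%E.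
Proof. apply: outer_measureU2. Qed.

Definition lset (F : seq R) : set R := [set z | z \in F].

Lemma lset_meas0 (F : seq R) : lebesgue_measure (lset F) = 0%E.
Proof.
elim: F => [|x F IH].
  rewrite (_ : lset [::] = set0) ?measure0 //.
  by apply/seteqP; split => z //=; rewrite /lset /= in_nil.
apply/eqP; rewrite eq_le measure_ge0 andbT.
rewrite (_ : lset (x :: F) = [set x] `|` lset F); last first.
  apply/seteqP; split => z; rewrite /lset /= in_cons.
    by case/orP => [/eqP ->|H]; [left|right].
  by case => [->|H]; rewrite ?eqxx ?H ?orbT.
apply: le_trans (outer_measureU2 _ _ _) _.
change (lebesgue_measure [set x] + lebesgue_measure (lset F) <= 0)%E.
by rewrite IH adde0 lebesgue_measure_set1.
Qed.

Lemma meas_itv_cc (a b : R) : a <= b ->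
  lebesgue_measure (`[a, b]%classic : set R) = (b - a)%:E.
Proof.
move=> ab; rewrite lebesgue_measure_itv /= lte_fin.
case: ifPn => [_|]; first by rewrite EFinB.
rewrite -leNgt => ba; have -> : a = b by apply/le_anti; rewrite ab ba.
by rewrite subrr.
Qed.

Lemma meas_itv_oo (a b : R) : a <= b ->
  lebesgue_measure (`]a, b[%classic : set R) = (b - a)%:E.
Proof.
move=> ab; rewrite lebesgue_measure_itv /= lte_fin.
case: ifPn => [_|]; first by rewrite EFinB.
rewrite -leNgt => ba; have -> : a = b by apply/le_anti; rewrite ab ba.
by rewrite subrr.
Qed.

Lemma cell_lemma (a b : R) (F : seq R) (Y : set R) (P : Prop) : a < b ->
  (forall y, a < y < b -> y \notin F -> (Y y <-> P)) ->
  (P -> lebesgue_measure (`[a, b]%classic `&` Y) = (b - a)%:E) /\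
  (~ P -> lebesgue_measure (`[a, b]%classic `&` Y) = 0%E).
Proof.
move=> ab HY; split => [HP|HP].
  apply/le_anti/andP; split.
    rewrite -(@meas_itv_cc a b (ltW ab)); apply: lm_le; exact: subIsetl.
  rewrite -(@meas_itv_oo a b (ltW ab)).
  apply: le_trans (_ : lebesgue_measure ((`[a, b]%classic `&` Y) `|` lset F) <= _)%E.
    apply: lm_le => y /=; rewrite in_itv /= => /andP[ay yb].
    case: (boolP (y \in F)) => yF; first by right.
    left; split; first by rewrite /= in_itv /= !ltW.
    by apply/(HY y _ yF)=> //; rewrite ay yb.
  by apply: le_trans (lm_U2 _ _) _; rewrite lset_meas0 adde0.
apply/le_anti; rewrite measure_ge0 andbT -(lset_meas0 [:: a, b & F]).
apply: lm_le => y /= [] ; rewrite in_itv /= => /andP[ay yb] Yy.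
rewrite /lset /= !in_cons; apply/negPn/negP; rewrite !negb_or => /and3P[ya yb' yF].
apply: HP; apply/(HY y _ yF) => //.
by rewrite !lt_def ay yb ya eq_sym yb'.
Qed.

Lemma pos_lemma (a b : R) (S : set R) :
  lenR (`[a, b]%classic `&` S) != 0 ->
  forall F : seq R, exists y, [/\ a < y < b, y \notin F & S y].
Proof.
move=> H F; apply: contrapT => Hn; move/negP: H; apply.
rewrite /lenR (_ : lebesgue_measure _ = 0%E) //.
apply/le_anti; rewrite measure_ge0 andbT -(lset_meas0 [:: a, b & F]).
apply: lm_le => y /= [] ; rewrite in_itv /= => /andP[ay yb] Sy.
rewrite /lset /= !in_cons; apply/negPn/negP; rewrite !negb_or => /and3P[ya yb' yF].
apply: Hn; exists y; split => //.
by rewrite !lt_def ay yb ya eq_sym yb'.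
Qed.

End Meas.

Section Arith.
Variable R : realType.
Variable p : nat.
Hypothesis hp : (2 <= p)%N.
Local Notation P := (p%:R : R).

Lemma P_gt0 : 0 < P.
Proof. by rewrite ltr0n; apply: leq_trans hp. Qed.
Lemma PX_gt0 q : 0 < P ^+ q.
Proof. exact: exprn_gt0 P_gt0. Qed.

Definition incell (q c : nat) (z : R) := c%:R <= z * P ^+ q < c.+1%:R.

Lemma coarsen q Q c z : (q <= Q)%N -> incell Q c z -> incell q (c %/ p ^ (Q - q))%N z.
Proof.
move=> qQ; set d := (p ^ (Q - q))%N.
have p0 : (0 < p)%N by apply: leq_trans hp.
have d0 : (0 < d)%N by rewrite expn_gt0 p0.
have d0' : 0 < d%:R :> R by rewrite ltr0n.
have E : z * P ^+ Q = (z * P ^+ q) * d%:R by rewrite natrX -mulrA -exprD subnKC.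
rewrite /incell E => /andP[h1 h2]; apply/andP; split.
  rewrite -(ler_pM2r d0'); apply: le_trans h1; rewrite -natrM ler_nat.
  exact: leq_trunc_div.
rewrite -(ltr_pM2r d0'); apply: lt_le_trans h2 _; rewrite -natrM ler_nat.
exact: ltn_ceil.
Qed.

Section Branch.
Variables (l : nat) (ns : 'I_l -> nat).

Definition bs (t : nat) : R := \sum_(i < l | (i < t)%N) P ^- ns i.

Lemma bsE (j : 'I_l) : branch_start R p ns j = bs j.
Proof. by []. Qed.

Lemma bs0 : bs 0 = 0.
Proof. by rewrite /bs big_pred0. Qed.

Lemma bsS t (ht : (t < l)%N) : bs t.+1 = bs t + P ^- ns (Ordinal ht).
Proof.
rewrite /bs (bigD1 (Ordinal ht)) //= addrC; congr (_ + _).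
by apply: eq_bigl => i; rewrite ltnS ltn_neqAle andbC.
Qed.

Lemma bsl : bs l = \sum_(j < l) P ^- ns j.
Proof. by rewrite /bs; apply: eq_bigl => i; rewrite ltn_ord. Qed.

Lemma bs_nat Q t : (forall i, ns i <= Q)%N ->
  bs t * P ^+ Q = (\sum_(i < l | (i < t)%N) p ^ (Q - ns i))%N%:R.
Proof.
move=> hQ; rewrite /bs mulr_suml natr_sum; apply: eq_bigr => i _.
rewrite natrX -(subnK (hQ i)) exprD mulrA mulrC mulrA subnK //.
by rewrite mulfV ?mul1r // expf_neq0 // gt_eqF // P_gt0.
Qed.

Lemma find_branch z : 0 <= z -> z < bs l ->
  (forall t, (t <= l)%N -> z != bs t) -> exists j : 'I_l, bs j < z < bs j.+1.
Proof.
move=> z0 zl hne.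
suff: forall t, (t <= l)%N -> z < bs t -> exists j : 'I_l, bs j < z < bs j.+1.
  by move/(_ l (leqnn l) zl).
elim => [|t IH] ht; first by rewrite bs0 ltNge z0.
case: (ltP z (bs t)) => [zt _|tz zt1]; first exact: IH (ltnW ht) zt.
exists (Ordinal ht) => /=; rewrite zt1 andbT lt_def tz andbT.
exact: (hne t (ltnW ht)).
Qed.

End Branch.
End Arith.

Section Good.
Variable R : realType.
Variable p : nat.
Hypothesis hp : (2 <= p)%N.
Local Notation P := (p%:R : R).
Variables (l : nat) (ns : 'I_l -> nat) (T : R -> R).
Hypothesis hT : condition1 p ns T.
Hypothesis hsum : bs R p l ns l = 1.
Variable M : nat.
Hypothesis hM : forall i, (ns i <= M)%N.
Local Notation bs := (bs R p l ns).
Local Notation incell := (incell R p).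

Definition good (q : nat) (Y : set R) (F : seq R) :=
  forall c z w, incell q c z -> incell q c w -> z < 1 -> z \notin F -> w \notin F ->
  (Y z <-> Y w).

Lemma good_sub q Y F G : good q Y F -> {subset F <= G} -> good q Y G.
Proof.
move=> H FG c z w hz hw z1 zG wG; apply: (H c) => //.
  by apply/negP => /FG; apply/negP.
by apply/negP => /FG; apply/negP.
Qed.

Definition preT (F : seq R) : seq R :=
  [seq bs t | t <- iota 0 l.+1] ++
  flatten [seq [seq bs j + y * P ^- ns j | y <- F] | j : 'I_l <- enum 'I_l].

Lemma bs_in_preT F t : (t <= l)%N -> bs t \in preT F.
Proof. by move=> tl; rewrite mem_cat map_f // mem_iota add0n ltnS tl. Qed.

Lemma branch_pt z F : 0 <= z -> z < 1 -> z \notin preT F ->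
  exists j : 'I_l, [/\ bs j < z < bs j.+1, T z = P ^+ ns j * (z - bs j),
                     0 < T z < 1 & T z \notin F].
Proof.
move=> z0 z1 zF.
have [j /andP[h1 h2]] : exists j : 'I_l, bs j < z < bs j.+1.
  apply: find_branch => //; first by rewrite hsum.
  move=> t tl; apply/negP => /eqP ez; move/negP: zF; apply.
  by rewrite ez; apply: bs_in_preT.
have hj : bs j.+1 = bs j + P ^- ns j.
  by rewrite (@bsS R p l ns j (ltn_ord j)); congr (_ + _ ^- ns _); apply: val_inj.
have Pn0 : 0 < P ^+ ns j by apply: PX_gt0 hp _.
have Tz : T z = P ^+ ns j * (z - bs j).
  by apply: hT; rewrite bsE h1 /= -bsE -hj.
exists j; split => //.
- by rewrite h1 h2.
- rewrite Tz mulr_gt0 ?subr_gt0 //=.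
  by rewrite -[X in _ < X](mulfV (lt0r_neq0 Pn0)) ltr_pM2l // ltrBlDl -hj.
apply/negP => TzF; move/negP: zF; apply; rewrite mem_cat; apply/orP; right.
apply/flatten_mapP; exists j; first by rewrite mem_enum.
apply/mapP; exists (T z) => //.
by rewrite Tz mulrAC mulfV ?mul1r 1?addrC ?subrK // gt_eqF.
Qed.

Lemma bs_succ (j : 'I_l) : bs j.+1 = bs j + P ^- ns j.
Proof.
by rewrite (@bsS R p l ns j (ltn_ord j)); congr (_ + _ ^- ns _); apply: val_inj.
Qed.

Lemma notin_pre F (j : 'I_l) x y : y = bs j + x * P ^- ns j -> y \notin preT F -> x \notin F.
Proof.
move=> -> yF; apply/negP => xF; move/negP: yF; apply; rewrite mem_cat; apply/orP; right.
apply/flatten_mapP; exists j; first by rewrite mem_enum.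
by apply/mapP; exists x.
Qed.

Lemma shift_cell Q n c a (x s : R) : (n <= Q)%N -> (a <= c)%N -> s * P ^+ Q = a%:R ->
  incell Q c x -> incell (Q - n) (c - a) (P ^+ n * (x - s)).
Proof.
move=> nQ ac Ea; rewrite /incell.
have -> : P ^+ n * (x - s) * P ^+ (Q - n) = x * P ^+ Q - a%:R.
  by rewrite mulrC mulrA -exprD subnK // mulrC mulrBl Ea.
rewrite natrB // -(subSn ac) natrB ?leqW // !lerD2r !ltrD2r.
by [].
Qed.

Lemma good_pre q Y F : good q Y F -> good (q + M) (T @^-1` Y) (preT F).
Proof.
move=> HY c z w hz hw z1 zF wF.
set Q := (q + M)%N.
have PQ : 0 < P ^+ Q by apply: PX_gt0 hp _.
have z0 : 0 <= z.
  by move: hz => /andP[h _]; rewrite -(pmulr_lge0 _ PQ); apply: le_trans h.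
have [j [/andP[h1 h2] Tz /andP[_ Tz1] TzF]] := @branch_pt z F z0 z1 zF.
have hQ : forall i, (ns i <= Q)%N by move=> i; apply: leq_trans (hM i) (leq_addl q M).
have Ea := @bs_nat R p hp l ns Q j hQ.
have Eb := @bs_nat R p hp l ns Q j.+1 hQ.
set a := (\sum_(i < l | (i < j)%N) p ^ (Q - ns i))%N in Ea.
set b := (\sum_(i < l | (i < j.+1)%N) p ^ (Q - ns i))%N in Eb.
move: hz hw => /andP[cz zc] /andP[cw wc].
have ac : (a <= c)%N.
  rewrite -ltnS -(ltr_nat R) -Ea; apply: lt_trans _ zc.
  by rewrite ltr_pM2r.
have cb : (c < b)%N.
  rewrite -(ltr_nat R) -Eb; apply: le_lt_trans cz _.
  by rewrite ltr_pM2r.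
have w1 : bs j < w.
  rewrite lt_def; apply/andP; split.
    apply/negP => /eqP ew; move/negP: wF; apply; rewrite ew.
    by apply: bs_in_preT; apply: ltnW.
  rewrite -(ler_pM2r PQ) Ea; apply: le_trans _ cw; by rewrite ler_nat.
have w2 : w < bs j.+1.
  rewrite -(ltr_pM2r PQ) Eb; apply: lt_le_trans wc _; by rewrite ler_nat.
have Tw : T w = P ^+ ns j * (w - bs j).
  by apply: hT; rewrite bsE w1 /= -bsE -bs_succ.
have TwF : T w \notin F.
  apply: (@notin_pre F j _ w) => //.
  by rewrite Tw mulrAC mulfV ?mul1r 1?addrC ?subrK // gt_eqF // PX_gt0.
have nQ : (ns j <= Q)%N := hQ j.
have qQ : (q <= Q - ns j)%N by rewrite leq_subRL // /Q addnC leq_add2l hM.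
have cz' := @shift_cell Q (ns j) c a z (bs j) nQ ac Ea (introT andP (conj cz zc)).
have cw' := @shift_cell Q (ns j) c a w (bs j) nQ ac Ea (introT andP (conj cw wc)).
rewrite /preimage /= Tz Tw.
apply: (HY _ _ _ (@coarsen R p hp _ _ _ _ qQ cz') (@coarsen R p hp _ _ _ _ qQ cw')).
- by rewrite -Tz.
- by rewrite -Tz.
- by rewrite -Tw.
Qed.

Lemma incell_of_itv k (i : nat) y : i%:R / P ^+ k < y < i.+1%:R / P ^+ k -> incell k i y.
Proof.
have Pk : 0 < P ^+ k by apply: PX_gt0 hp _.
case/andP => h1 h2; rewrite /incell.
by rewrite -ler_pdivrMr // ltW //= -ltr_pdivlMr.
Qed.

Lemma cell_width k (i : nat) : i.+1%:R / P ^+ k - i%:R / P ^+ k = (P ^+ k)^-1.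
Proof. by rewrite -mulrBl -addn1 natrD addrAC subrr add0r mul1r. Qed.

Lemma step_rel q Y F k (i j : 'I_(p ^ k)) : good q Y F -> (q + M <= k)%N ->
  lenR (Ecell j `&` T @^-1` Ecell i) != 0 ->
  lenR (Ecell i `&` Y) = lenR (Ecell j `&` T @^-1` Y).
Proof.
move=> HY qk H.
have Pk : 0 < P ^+ k by apply: PX_gt0 hp _.
set ai : R := i%:R / P ^+ k; set bi : R := i.+1%:R / P ^+ k.
set G := preT (F ++ [:: ai; bi]).
rewrite /Ecell in H.
have [y [/andP[ay yb] yG Ty]] := @pos_lemma R _ _ _ H G.
have y0 : 0 <= y by apply: le_trans (ltW ay); rewrite divr_ge0 // ltW.
have y1 : y < 1.
  apply: lt_le_trans yb _; rewrite ler_pdivrMr // mul1r -natrX ler_nat.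
  exact: ltn_ord.
have [j' [_ Tyeq /andP[Ty0 Ty1] TyF]] := @branch_pt y (F ++ [:: ai; bi]) y0 y1 yG.
move: TyF; rewrite mem_cat !in_cons in_nil orbF !negb_or => /and3P[TyF Tya Tyb].
move: Ty; rewrite /preimage /= in_itv /= => /andP[Ty2 Ty3].
have Tyi : ai < T y < bi by rewrite !lt_def Ty2 Ty3 Tya eq_sym Tyb.
have HY' : good q Y (F ++ [:: ai; bi]).
  by apply: (@good_sub q Y F _ HY) => u uF; rewrite mem_cat uF.
have HG := @good_pre q Y _ HY'.
have qk' : (q <= k)%N by apply: leq_trans qk; apply: leq_addr.
have ab : ai < bi by case/andP: Tyi => t1 t2; exact: lt_trans t1 t2.
have ab' : j%:R / P ^+ k < j.+1%:R / P ^+ k by exact: lt_trans ay yb.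
have C1 := @cell_lemma R ai bi F Y (Y (T y)) ab.
have C2 := @cell_lemma R (j%:R / P ^+ k) (j.+1%:R / P ^+ k) G (T @^-1` Y) (Y (T y)) ab'.
have ci := @coarsen R p hp q k i (T y) qk' (@incell_of_itv k i (T y) Tyi).
have cj := @coarsen R p hp (q + M) k j y qk (@incell_of_itv k j y (introT andP (conj ay yb))).
have E1 : forall u, ai < u < bi -> u \notin F -> (Y u <-> Y (T y)).
  move=> u hu uF; have cu := @coarsen R p hp q k i u qk' (@incell_of_itv k i u hu).
  by have [h1 h2] := HY _ _ _ ci cu Ty1 TyF uF; split.
have E2 : forall u, j%:R / P ^+ k < u < j.+1%:R / P ^+ k -> u \notin G ->
    ((T @^-1` Y) u <-> Y (T y)).
  move=> u hu uG; have cu := @coarsen R p hp (q + M) k j u qk (@incell_of_itv k j u hu).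
  have := HG _ _ _ cj cu y1 yG uG; rewrite /preimage /=.
  by move=> [h1 h2]; split.
have [C1a C1b] := C1 E1; have [C2a C2b] := C2 E2.
rewrite /lenR /Ecell; case: (pselect (Y (T y))) => hY.
  by rewrite (C1a hY) (C2a hY) /= !cell_width.
by rewrite (C1b hY) (C2b hY).
Qed.
End Good.

Section Mx.
Variable R : realType.
Local Open Scope complex_scope.

Lemma conj_diag N (U : 'M[R[i]]_N) (v w : 'I_N -> R[i]) :
  (map_mx conjc U)^T *m U = 1%:M ->
  (forall i j, U i j != 0 -> v i = w j) ->
  (map_mx conjc U)^T *m diag_mx (\row_i v i) *m U = diag_mx (\row_i w i).
Proof.
move=> HU Hvw; apply/matrixP => a b.
rewrite mul_mx_diag !mxE.
transitivity (\sum_i (map_mx conjc U)^T a i * U i b * w b).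
  apply: eq_bigr => i _; rewrite !mxE.
  case: (eqVneq (U i b) 0) => [->|h]; first by rewrite !mulr0 mul0r.
  by rewrite (Hvw _ _ h) mulrAC.
rewrite -mulr_suml.
have := congr1 (fun A : 'M[R[i]]_N => A a b) HU; rewrite !mxE => ->.
by case: eqVneq => [->|]; rewrite ?mulr1n ?mulr0n ?mul1r ?mul0r.
Qed.

End Mx.

Section Cyl.
Variable R : realType.
Variable p : nat.
Hypothesis hp : (2 <= p)%N.
Local Notation P := (p%:R : R).

Lemma cyl_good (x : seq 'I_p) : good R p (size x) (cylinder p x) [::].
Proof.
set m := size x.
set cc : R := \sum_(i < m) (nth 0%N [seq val d | d <- x] i)%:R * P ^- i.+1.
set C := (\sum_(i < m) nth 0%N [seq val d | d <- x] i * p ^ (m - i.+1))%N.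
have Pm : 0 < P ^+ m by apply: PX_gt0 hp _.
have EC : cc * P ^+ m = C%:R.
  rewrite /cc mulr_suml natr_sum; apply: eq_bigr => i _.
  have e : P ^+ m = P ^+ (m - i.+1) * P ^+ i.+1 by rewrite -exprD subnK.
  rewrite natrM natrX e -mulrA; congr (_ * _).
  by rewrite mulrCA mulVf ?mulr1 // expf_neq0 // gt_eqF // P_gt0.
have key : forall c z, incell R p m c z -> (cylinder p x z <-> c = C).
  move=> c z /andP[h1 h2]; rewrite /cylinder /= in_itv /=.
  rewrite -/m -/cc -(ler_pM2r Pm) -(ltr_pM2r Pm) mulrDl mulVf ?gt_eqF // EC natr1.
  split.
    case/andP => h3 h4; apply/eqP; rewrite eqn_leq.
    rewrite -ltnS -(ltr_nat R) (le_lt_trans h1) //=.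
    by rewrite -ltnS -(ltr_nat R) (le_lt_trans h3).
  by move=> <-; rewrite h1 h2.
move=> c z w hz hw _ _ _.
rewrite (key _ _ hz) (key _ _ hw); by [].
Qed.
End Cyl.

Section Final.
Variable R : realType.
Variable p : nat.
Hypothesis hp : (2 <= p)%N.
Local Notation P := (p%:R : R).
Variables (l : nat) (ns : 'I_l -> nat) (T : R -> R).
Hypothesis hT : condition1 p ns T.
Hypothesis hsum : bs R p l ns l = 1.
Variable M : nat.
Hypothesis hM : forall i, (ns i <= M)%N.
Variable k : nat.
Variable U : 'M[R[i]]_(p ^ k).
Hypothesis hQ : is_quantization p k T U.
Local Notation Us := ((map_mx conjc U)^T).

Lemma UsU : Us *m U = 1%:M.
Proof. exact: mulmx1C hQ.1. Qed.

Lemma lenE (i : 'I_(p ^ k)) : lenR (Ecell i) = (P ^+ k)^-1.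
Proof.
have Pk : 0 < P ^+ k by apply: PX_gt0 hp _.
rewrite /lenR /Ecell meas_itv_cc /= ?cell_width //.
by rewrite ler_pM2r ?invr_gt0 // ler_nat.
Qed.

Lemma step_mx q Y F : good R p q Y F -> (q + M <= k)%N ->
  Us *m Pop p k Y *m U = Pop p k (T @^-1` Y).
Proof.
move=> HY qk; rewrite /Pop; apply: conj_diag UsU _ => i j Hij.
have Hl : lenR (Ecell j `&` T @^-1` Ecell i) != 0.
  apply/negP => /eqP h0; move/negP: Hij; apply.
  have := hQ.2 i j; rewrite /Bmat h0 mul0r => /esym /eqP.
  by rewrite expf_eq0 /= normr_eq0.
by rewrite (@step_rel R p hp l ns T hT hsum M hM _ _ _ _ _ _ HY qk Hl) !lenE.
Qed.

Lemma pow_claim n : forall q Y F, good R p q Y F -> (q + n * M <= k)%N ->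
  Us ^+ n *m Pop p k Y *m U ^+ n = Pop p k (iter n T @^-1` Y).
Proof.
elim: n => [|n IH] q Y F HY hk.
  by rewrite !expr0 mul1mx mulmx1.
have hk1 : (q + M <= k)%N by apply: leq_trans hk; rewrite leq_add2l mulSn leq_addr.
have hk2 : (q + M + n * M <= k)%N by rewrite -addnA -mulSn.
rewrite exprSr exprS -!mulmxE !mulmxA -(mulmxA (Us ^+ n) Us) -(mulmxA (Us ^+ n)).
rewrite (@step_mx q Y F HY hk1).
exact: (IH _ _ _ (@good_pre R p hp l ns T hT hsum M hM q Y F HY) hk2).
Qed.

Lemma inv_pow n : invmx (U ^+ n) = Us ^+ n.
Proof.
have UUs : U ^+ n *m Us ^+ n = 1%:M.
  rewrite mulmxE -exprMn_comm; first by rewrite -mulmxE hQ.1 expr1n.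
  by rewrite /GRing.comm -!mulmxE hQ.1 UsU.
have [uU _] := mulmx1_unit UUs.
by rewrite -[RHS]mul1mx -(mulVmx uU) -mulmxA UUs mulmx1.
Qed.

End Final.

Theorem corollary1 (R : realType) (p l : nat) (ns : 'I_l -> nat) (T : R -> R)
    (k : nat) (U : 'M[R[i]]_(p ^ k)) (x : seq 'I_p) (n : nat) :
  (2 <= p)%N ->
  (forall j, (1 <= ns j)%N) ->
  \sum_(j < l) (p%:R ^- ns j : R) = 1 ->
  condition1 p ns T ->
  is_quantization p k T U ->
  ((n + size x)%:Z <= nE R p k ns)%R ->
  invmx (U ^+ n) *m Pop p k (cylinder p x) *m U ^+ n
    = Pop p k ((iter n T) @^-1` cylinder p x).
Proof.
move=> hp hns hsum0 hT hQ hnE.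
have hsum : bs R p l ns l = 1 by rewrite bsl.
have l0 : (0 < l)%N.
  rewrite lt0n; apply/negP => /eqP l0; move: hsum0.
  rewrite big1 => [|i _]; last by have := ltn_ord i; rewrite [X in (_ < X)%N]l0.
  by move/esym/eqP; rewrite oner_eq0.
pose i0 : 'I_l := Ordinal l0.
have Emax := @bigop.bigmax_eq_arg _ i0 xpredT (fun j => p ^ ns j)%N isT.
set jm := [arg max_(i > i0 | xpredT i) (p ^ ns i)%N] in Emax.
set M := ns jm.
have hM : forall i, (ns i <= M)%N.
  move=> i; rewrite -(leq_exp2l _ _ hp) /M -Emax.
  exact: (@leq_bigmax_cond _ xpredT (fun j => p ^ ns j)%N i).
have M0 : (0 < M)%N := hns jm.
have P1 : 1 < (p%:R : R) by rewrite ltr1n.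
have P0 : 0 < (p%:R : R) by apply: lt_trans P1.
have lnP : 0 < ln (p%:R : R) by apply: ln_gt0.
have EL : (\max_(j < l) p ^ ns j)%N = (p ^ M)%N by rewrite -Emax.
move: hnE; rewrite /nE EL floor_ge_int => hnE.
have h : ((n + size x)%:R : R) <= ln ((p ^ k)%:R : R) / ln ((p ^ M)%:R : R) by exact hnE.
move: h; rewrite !natrX !lnXn // -[ln _ *+ k]mulr_natr -[ln _ *+ M]mulr_natr.
rewrite ler_pdivlMr ?mulr_gt0 ?ltr0n //.
rewrite mulrCA ler_pM2l // -natrM ler_nat => h.
have hb : (size x + n * M <= k)%N.
  apply: leq_trans h; rewrite mulnDl addnC leq_add2l.
  by rewrite leq_pmulr.
rewrite (@inv_pow R p T k U hQ).
exact: (@pow_claim R p hp l ns T hT hsum M hM k U hQ n _ _ _ (@cyl_good R p hp x) hb).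
Qed.
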